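(* For every $m\in\mathbb N$, $(\mathcal F_m,l_m)$ is a spherically complete ultrametric space.
   Context: Formulas are built from $\bot$ and atoms by $\to$ and $\Box$; sequents $\Gamma\Rightarrow\Delta$ have finite multisets of formulas on each side, and $\Box\Pi$ denotes $\{\Box B:B\in\Pi\}$. The calculus $\mathsf{Grz}_\infty+\mathsf{cut}$ has initial sequents $\Gamma,p\Rightarrow p,\Delta$ ($p$ atomic), $\Gamma,\bot\Rightarrow\Delta$, and rules $(\to_L)$ from $\Gamma,B\Rightarrow\Delta$ and $\Gamma\Rightarrow A,\Delta$ infer $\Gamma,A\to B\Rightarrow\Delta$; $(\to_R)$ from $\Gamma,A\Rightarrow B,\Delta$ infer $\Gamma\Rightarrow A\to B,\Delta$; $(\mathsf{refl})$ from $\Gamma,B,\Box B\Rightarrow\Delta$ infer $\Gamma,\Box B\Rightarrow\Delta$; $(\Box)$ from left premise $\Gamma,\Box\Pi\Rightarrow A,\Delta$ and right premise $\Box\Pi\Rightarrow A$ infer $\Gamma,\Box\Pi\Rightarrow\Box A,\Delta$; $(\mathsf{cut})$ from $\Gamma\Rightarrow A,\Delta$ and $\Gamma,A\Rightarrow\Delta$ infer $\Gamma\Rightarrow\Delta$. An $\infty$-proof is a possibly infinite tree of sequents built by these rules with leaves labelled by initial sequents, in which every infinite branch passes through a right premise of $(\Box)$ infinitely often. $\mathcal P$ is the set of all $\infty$-proofs. The $n$-fragment of an $\infty$-proof is the finite tree obtained by cutting every branch at the $n$-th (counting from the root) right premise of the rule $(\Box)$; the $1$-fragment is the main fragment, and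 the local height $|\pi|$ is the length of the longest branch in the main fragment of $\pi$ (an $\infty$-proof consisting only of an initial sequent has local height $0$). For $\pi,\tau\in\mathcal P$ write $\pi\sim_n\tau$ if their $n$-fragments coincide; $\pi\sim_0\tau$ always. $\mathcal F_m$ is the set of all functions $\mathsf u:\mathcal P^m\to\mathcal P$ that are non-expansive, i.e. for all tuples $\vec\pi,\vec\pi'$ and $n\in\mathbb N$, if $\pi_i\sim_n\pi'_i$ for all $i\le m$ then $\mathsf u(\vec\pi)\sim_n\mathsf u(\vec\pi')$. For $\mathsf a,\mathsf b\in\mathcal F_m$ write $\mathsf a\sim_{n,k}\mathsf b$ if $\mathsf a(\vec\pi)\sim_n\mathsf b(\vec\pi)$ for all $\vec\pi\in\mathcal P^m$ and moreover $\mathsf a(\vec\pi)\sim_{n+1}\mathsf b(\vec\pi)$ whenever $\sum_{i=1}^m|\pi_i|<k$. Define $l_m(\mathsf a,\mathsf b)=\frac12\inf\{2^{-n}+2^{-n-k}\mid \mathsf a\sim_{n,k}\mathsf b\}$. An ultrametric space is a metric space with $d(x,z)\le\max\{d(x,y),d(y,z)\}$; it is spherically complete if every descending sequence of closed balls $B_r(x)=\{y: d(x,y)\le r\}$ has a common point. *)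

(* Defs.v *)
From Stdlib Require Import Reals ClassicalEpsilon.
From Coquelicot Require Import Rbar Lub.
From HB Require Import structures.
From mathcomp Require Import all_boot.
From mathcomp Require Import finmap multiset.

Set Implicit Arguments.
Unset Strict Implicit.
Unset Printing Implicit Defensive.

Inductive fml : Type :=
| Bot : fml
| Atom : nat -> fml
| Imp : fml -> fml -> fml
| Box : fml -> fml.

Fixpoint fml_enc (A : fml) : GenTree.tree nat :=
  match A with
  | Bot => GenTree.Node 0 [::]
  | Atom p => GenTree.Leaf p
  | Imp A B => GenTree.Node 1 [:: fml_enc A; fml_enc B]
  | Box A => GenTree.Node 2 [:: fml_enc A]
  end.

Fixpoint fml_dec (t : GenTree.tree nat) : option fml :=
  match t with
  | GenTree.Leaf p => Some (Atom p)
  | GenTree.Node 0 [::] => Some Bot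
  | GenTree.Node 1 [:: a; b] =>
      match fml_dec a, fml_dec b with
      | Some A, Some B => Some (Imp A B)
      | _, _ => None
      end
  | GenTree.Node 2 [:: a] =>
      match fml_dec a with Some A => Some (Box A) | None => None end
  | _ => None
  end.

Lemma fml_encK : pcancel fml_enc fml_dec.
Proof. by elim=> [|p|A IHA B IHB|A IHA] //=; rewrite ?IHA ?IHB. Qed.

HB.instance Definition _ := Countable.copy fml (pcan_type fml_encK).

Local Open Scope mset_scope.

Definition fmset := {mset fml}.
Definition sequent : Type := (fmset * fmset)%type.

Definition boxes (Pi : fmset) : fmset := seq_mset (map Box (enum_mset Pi)).

Definition initial (s : sequent) : Prop :=
  (exists (G D : fmset) (p : nat), s = (G `+` [mset Atom p], [mset Atom p] `+` D))
  \/ (exists (G D : fmset), s = (G `+` [mset Bot], D)).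

Definition impR_inst (s s0 : sequent) : Prop :=
  exists (G D : fmset) (A B : fml),
    s = (G, [mset Imp A B] `+` D) /\ s0 = (G `+` [mset A], [mset B] `+` D).

Definition refl_inst (s s0 : sequent) : Prop :=
  exists (G D : fmset) (B : fml),
    s = (G `+` [mset Box B], D) /\ s0 = (G `+` [mset B] `+` [mset Box B], D).

Definition impL_inst (s s0 s1 : sequent) : Prop :=
  exists (G D : fmset) (A B : fml),
    s = (G `+` [mset Imp A B], D) /\ s0 = (G `+` [mset B], D)
    /\ s1 = (G, [mset A] `+` D).

Definition box_inst (s s0 s1 : sequent) : Prop :=
  exists (G D Pi : fmset) (A : fml),
    s = (G `+` boxes Pi, [mset Box A] `+` D)
    /\ s0 = (G `+` boxes Pi, [mset A] `+` D)
    /\ s1 = (boxes Pi, [mset A]).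

Definition cut_inst (s s0 s1 : sequent) : Prop :=
  exists (G D : fmset) (A : fml),
    s = (G, D) /\ s0 = (G, [mset A] `+` D) /\ s1 = (G `+` [mset A], D).

Close Scope mset_scope.
Local Close Scope R_scope.
Local Open Scope nat_scope.

(* A node is addressed by the
   sequence of child indices from the root (child 0 = left premise,
   child 1 = right premise); [t q = None] means there is no node at q. *)
Definition tree := seq nat -> option sequent.

Definition node_ok (t : tree) (p : seq nat) (s : sequent) : Prop :=
  ((forall i, t (rcons p i) = None) /\ initial s)
  \/ (exists s0, t (rcons p 0) = Some s0
        /\ (forall i, 1 <= i -> t (rcons p i) = None)
        /\ (impR_inst s s0 \/ refl_inst s s0))
  \/ (exists s0 s1, t (rcons p 0) = Some s0 /\ t (rcons p 1) = Some s1
        /\ (forall i, 2 <= i -> t (rcons p i) = None)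
        /\ (impL_inst s s0 s1 \/ box_inst s s0 s1 \/ cut_inst s s0 s1)).

Definition is_rp (t : tree) (q : seq nat) : Prop :=
  exists p s s0 s1, q = rcons p 1 /\ t p = Some s /\ t (rcons p 0) = Some s0
    /\ t q = Some s1 /\ box_inst s s0 s1.

Definition branch (b : nat -> nat) (n : nat) : seq nat := mkseq b n.

Definition is_infproof (t : tree) : Prop :=
  [/\ t [::] <> None,
      (forall p i, t (rcons p i) <> None -> t p <> None),
      (forall p s, t p = Some s -> node_ok t p s) &
      (forall b : nat -> nat, (forall n, t (branch b n) <> None) ->
         forall N, exists n, N <= n /\ is_rp t (branch b n))].

Definition infproof := {t : tree | is_infproof t}.

Definition nrp (t : tree) (q : seq nat) : nat :=
  \sum_(i < size q)
     (if excluded_middle_informative (is_rp t (take i q)) then 1 else 0).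

(* n-fragment: cut every branch at the n-th right premise of (Box);
   that right premise is kept as a leaf (with its sequent) *)
Definition fragment (t : tree) (n : nat) : tree :=
  fun q => if nrp t q < n then t q else None.

Definition simn (n : nat) (pi tau : infproof) : Prop :=
  fragment (proj1_sig pi) n = fragment (proj1_sig tau) n.

Definition is_lheight (pi : infproof) (h : nat) : Prop :=
  (exists q, fragment (proj1_sig pi) 1 q <> None /\ size q = h) /\
  (forall q, fragment (proj1_sig pi) 1 q <> None -> size q <= h).

Definition lheight (pi : infproof) : nat :=
  epsilon (inhabits 0) (is_lheight pi).

Definition nonexpansive (m : nat) (u : ('I_m -> infproof) -> infproof) : Prop :=
  forall (v v' : 'I_m -> infproof) (n : nat),
    (forall i, simn n (v i) (v' i)) -> simn n (u v) (u v').

Definition Fm (m : nat) := {u : ('I_m -> infproof) -> infproof | nonexpansive u}.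

Definition simnk (m n k : nat) (a b : Fm m) : Prop :=
  (forall v, simn n (proj1_sig a v) (proj1_sig b v)) /\
  (forall v, \sum_(i < m) lheight (v i) < k ->
             simn n.+1 (proj1_sig a v) (proj1_sig b v)).

Local Open Scope R_scope.

Definition lm (m : nat) (a b : Fm m) : R :=
  / 2 * real (Glb_Rbar (fun x => exists n k : nat,
              simnk n k a b /\ x = (/ 2) ^ n + (/ 2) ^ (n + k))).

Definition is_ultrametric (T : Type) (d : T -> T -> R) : Prop :=
  (forall x y, 0 <= d x y) /\
  (forall x y, d x y = 0 <-> x = y) /\
  (forall x y, d x y = d y x) /\
  (forall x y z, d x z <= d x y + d y z) /\
  (forall x y z, d x z <= Rmax (d x y) (d y z)).

Definition cball (T : Type) (d : T -> T -> R) (x : T) (r : R) : T -> Prop :=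
  fun y => d x y <= r.

Definition spherically_complete (T : Type) (d : T -> T -> R) : Prop :=
  forall (c : nat -> T) (r : nat -> R),
    (forall i, 0 <= r i) ->
    (forall i y, cball d (c i.+1) (r i.+1) y -> cball d (c i) (r i) y) ->
    exists y, forall i, cball d (c i) (r i) y.

(* Main.v *)
Require Import Defs.
From Stdlib Require Import Reals.
From mathcomp Require Import all_boot zify.
From Stdlib Require Import ClassicalEpsilon Classical FunctionalExtensionality ProofIrrelevance Lra.
From Coquelicot Require Import Rbar Lub.

Set Implicit Arguments.
Unset Strict Implicit.
Unset Printing Implicit Defensive.

Local Open Scope nat_scope.

Definition bit (t : tree) (p : seq nat) : nat :=
  if excluded_middle_informative (is_rp t p) then 1 else 0.

Lemma bit_le1 t p : bit t p <= 1.
Proof. by rewrite /bit; case: excluded_middle_informative. Qed.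

Lemma bit_ext t t' p : (is_rp t p <-> is_rp t' p) -> bit t p = bit t' p.
Proof.
move=> H; rewrite /bit.
case: excluded_middle_informative => h1; case: excluded_middle_informative => h2 //.
  by exfalso; apply: h2; apply H.
by exfalso; apply: h1; apply H.
Qed.

Lemma nrp_nil t : nrp t [::] = 0.
Proof. by rewrite /nrp big_ord0. Qed.

Lemma take_rcons_lt (p : seq nat) x i : i <= size p -> take i (rcons p x) = take i p.
Proof.
move=> H; rewrite -cats1 take_cat.
case: ltnP => // Hi.
have -> : i = size p by apply/eqP; rewrite eqn_leq H Hi.
by rewrite subnn take0 cats0 take_size.
Qed.

Lemma nrp_rcons t p x : nrp t (rcons p x) = nrp t p + bit t p.
Proof.
rewrite /nrp size_rcons big_ord_recr /=.
rewrite take_rcons_lt // take_size.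
congr (_ + _); apply: eq_bigr => i _ /=.
by rewrite take_rcons_lt // ltnW.
Qed.

Lemma nrp_le_size t q : nrp t q <= size q.
Proof.
elim/last_ind: q => [|p x IH]; first by rewrite nrp_nil.
rewrite nrp_rcons size_rcons -addn1 leq_add //; exact: bit_le1.
Qed.

Lemma is_rp_ext t t' x :
  (forall p, x = rcons p 1 -> t p = t' p /\ t (rcons p 0) = t' (rcons p 0)) ->
  t x = t' x -> is_rp t x -> is_rp t' x.
Proof.
move=> H Hx [p [s [s0 [s1 [E [H1 [H2 [H3 H4]]]]]]]].
have [Ha Hb] := H p E.
exists p, s, s0, s1; split; first exact: E.
split; first by rewrite -Ha.
split; first by rewrite -Hb.
by split => //; rewrite -Hx.
Qed.

Lemma is_rp_rcons t x : is_rp t x -> exists p, x = rcons p 1.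
Proof. by move=> [p [_ [_ [_ [E _]]]]]; exists p. Qed.

Lemma nrp_size_ext t t' q :
  (forall x, size x <= size q -> t x = t' x) -> nrp t q = nrp t' q.
Proof.
elim/last_ind: q => [|p y IH] H; first by rewrite !nrp_nil.
rewrite !nrp_rcons IH; last by move=> x Hx; apply: H; rewrite size_rcons ltnW.
congr (_ + _); apply: bit_ext.
have Hp : forall x, size x <= size p -> t x = t' x.
  by move=> x Hx; apply: H; rewrite size_rcons ltnW.
have HH : forall p', p = rcons p' 1 -> t p' = t' p' /\ t (rcons p' 0) = t' (rcons p' 0).
  move=> p' E; split; apply: Hp; rewrite E ?size_rcons //.
split; apply: is_rp_ext.
- by move=> p' E; have [-> ->] := HH p' E.
- by apply: Hp.
- by move=> p' E; have [-> ->] := HH p' E.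
- by symmetry; apply: Hp.
Qed.

Lemma frag_size_ext t t' n q :
  (forall x, size x <= size q -> t x = t' x) -> fragment t n q = fragment t' n q.
Proof.
move=> H; rewrite /fragment (nrp_size_ext H) H //.
Qed.

Lemma frag_Some t n x s : fragment t n x = Some s -> t x = Some s.
Proof. by rewrite /fragment; case: ifP. Qed.

Lemma is_rp_frag t n x : is_rp (fragment t n) x -> is_rp t x.
Proof.
move=> [p [s [s0 [s1 [E [H1 [H2 [H3 H4]]]]]]]].
exists p, s, s0, s1; split; first exact: E.
split; first exact: (frag_Some H1).
split; first exact: (frag_Some H2).
split; first exact: (frag_Some H3).
exact: H4.
Qed.

Lemma minn_lt_eq a b M : a < M -> minn b M = minn a M -> b = a.
Proof. by move=> H; case: (ltnP b M) => H1; case: (ltnP a M) H => H2 // _ E; lia. Qed.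

Lemma minn_ge a b M : M <= a -> minn b M = minn a M -> M <= b.
Proof. by move=> H; case: (ltnP b M) => H1; case: (ltnP a M) H => H2 // _ E; lia. Qed.

Lemma nrp_frag_min t M y : minn (nrp (fragment t M) y) M = minn (nrp t y) M.
Proof.
elim/last_ind: y => [|p x IH]; first by rewrite !nrp_nil.
rewrite !nrp_rcons.
case: (ltnP (nrp t p) M) => Hp.
  have Ep : nrp (fragment t M) p = nrp t p by apply: minn_lt_eq Hp IH.
  rewrite Ep; congr (minn (_ + _) _); apply: bit_ext; split; first exact: is_rp_frag.
  apply: is_rp_ext.
  - move=> p' E; rewrite /fragment.
    have H2 : nrp t (rcons p' 0) < M by rewrite nrp_rcons -(nrp_rcons _ _ 1) -E.
    have H3 : nrp t p' < M by apply: leq_ltn_trans H2; rewrite nrp_rcons leq_addr.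
    by rewrite H2 H3.
  - by rewrite /fragment Hp.
have Hf : M <= nrp (fragment t M) p by apply: minn_ge Hp IH.
rewrite (minn_idPr (leq_trans Hf (leq_addr _ _))).
by rewrite (minn_idPr (leq_trans Hp (leq_addr _ _))).
Qed.

Lemma nrp_frag t M y : nrp t y < M -> nrp (fragment t M) y = nrp t y.
Proof. by move=> H; apply: minn_lt_eq H (nrp_frag_min _ _ _). Qed.

Lemma nrp_frag_lt t M y : nrp (fragment t M) y < M -> nrp t y = nrp (fragment t M) y.
Proof. by move=> H; apply: minn_lt_eq H (esym (nrp_frag_min _ _ _)). Qed.

Lemma frag_frag t n n' : n' <= n -> fragment (fragment t n) n' = fragment t n'.
Proof.
move=> Hn; apply: functional_extensionality => q.
case H: (nrp t q < n').
  have H' : nrp t q < n := leq_trans H Hn.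
  by rewrite /fragment (nrp_frag H') H H'.
have -> : fragment t n' q = None by rewrite /fragment H.
change ((if nrp (fragment t n) q < n' then fragment t n q else None) = None).
case: ifP => // H3.
rewrite /fragment; case: ifP => // H2.
by rewrite (nrp_frag H2) H in H3.
Qed.

Lemma simn_mono n n' a b : n' <= n -> simn n a b -> simn n' a b.
Proof.
move=> Hn; rewrite /simn => E.
by rewrite -(frag_frag _ Hn) E frag_frag.
Qed.

Lemma simn_sym n a b : simn n a b -> simn n b a.
Proof. by rewrite /simn. Qed.

Lemma simn_trans n a b c : simn n a b -> simn n b c -> simn n a c.
Proof. by rewrite /simn => ->. Qed.

Lemma simn_refl n a : simn n a a.
Proof. by []. Qed.

Lemma simn0 a b : simn 0 a b.
Proof. by rewrite /simn /fragment. Qed.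

Lemma simn_agree t t' M y : fragment t M = fragment t' M -> nrp t y < M ->
  t' y = t y /\ nrp t' y = nrp t y.
Proof.
move=> E H.
have H1 := nrp_frag H.
have H2 : nrp (fragment t' M) y < M by rewrite -E H1.
have H3 := nrp_frag_lt H2.
have Hn : nrp t' y = nrp t y by rewrite H3 -E H1.
split => //.
have : fragment t M y = fragment t' M y by rewrite E.
by rewrite /fragment H Hn H.
Qed.

Lemma simn_size n (a b : infproof) x : simn n a b -> size x < n ->
  proj1_sig a x = proj1_sig b x.
Proof.
move=> E H.
have := simn_agree E (leq_ltn_trans (nrp_le_size _ _) H).
by case=> ->.
Qed.

Lemma infproof_eq (a b : infproof) : proj1_sig a = proj1_sig b -> a = b.
Proof.
case: a => ta Ha; case: b => tb Hb /= E; subst.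
by rewrite (proof_irrelevance _ Ha Hb).
Qed.

Lemma simn_all_eq (a b : infproof) : (forall n, simn n a b) -> a = b.
Proof.
move=> H; apply: infproof_eq; apply: functional_extensionality => q.
exact: (simn_size (H (size q).+1)).
Qed.

Lemma lheight_simn (a b : infproof) : simn 1 a b -> lheight a = lheight b.
Proof. by rewrite /simn /lheight /is_lheight => ->. Qed.
Lemma node_ok_ext t t' p s : (forall i, t (rcons p i) = t' (rcons p i)) ->
  node_ok t p s -> node_ok t' p s.
Proof. move=> H; rewrite /node_ok; setoid_rewrite H; done. Qed.

Lemma branchS b n : branch b n.+1 = rcons (branch b n) (b n).
Proof. by rewrite /branch mkseqS. Qed.

Lemma size_branch b n : size (branch b n) = n.
Proof. by rewrite /branch size_mkseq. Qed.

Lemma limit_infproof (s : nat -> infproof) (I : nat -> nat) :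
  (forall M j, I M <= j -> simn M (s (I M)) (s j)) ->
  exists T : infproof, forall M, simn M T (s (I M)).
Proof.
move=> H.
pose st j := proj1_sig (s j).
have Hs : forall M j x, I M <= j -> size x < M -> st j x = st (I M) x.
  by move=> M j x Hj Hx; symmetry; apply: (simn_size (H M j Hj) Hx).
pose T0 : tree := fun q => st (I (size q).+1) q.
have agreeT : forall N j, I N.+1 <= j -> forall x, size x <= N -> st j x = T0 x.
  move=> N j Hj x Hx.
  rewrite (Hs _ _ _ Hj) //.
  rewrite -(Hs N.+1 (maxn (I N.+1) (I (size x).+1))) ?leq_maxl //.
  by rewrite /T0 (Hs _ _ _ (leq_maxr _ _)).
have FT : forall M, fragment T0 M = fragment (st (I M)) M.
  move=> M; apply: functional_extensionality => q.
  pose j := maxn (I M) (I (size q).+1).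
  rewrite (@frag_size_ext T0 (st j)); last first.
    by move=> x Hx; rewrite (agreeT (size q)) // leq_maxr.
  by have := H M j (leq_maxl _ _); rewrite /simn => ->.
have HT : is_infproof T0.
  split.
  - rewrite /T0 /=; by case: (proj2_sig (s (I 1))).
  - move=> p i.
    rewrite -(agreeT (size p).+1 (I (size p).+2)) // ?size_rcons //.
    rewrite -(agreeT (size p).+1 (I (size p).+2)) //.
    by case: (proj2_sig (s (I (size p).+2))) => _ Hc _ _; apply: Hc.
  - move=> p s0 Hp.
    have E : forall x, size x <= (size p).+1 -> st (I (size p).+2) x = T0 x.
      by move=> x Hx; apply: agreeT.
    apply: (@node_ok_ext (st (I (size p).+2))).
      by move=> i; apply: E; rewrite size_rcons.
    case: (proj2_sig (s (I (size p).+2))) => _ _ Hn _; apply: Hn.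
    by have := E p (leqnSn _); rewrite Hp.
  - move=> b Hb N.
    apply: NNPP => Hno.
    have Hle : forall n, nrp T0 (branch b n) <= N.
      elim=> [|n IH]; first by rewrite /branch /= nrp_nil.
      case: (ltnP n N) => Hn.
        by apply: leq_trans (nrp_le_size _ _) _; rewrite size_branch.
      rewrite branchS nrp_rcons /bit.
      case: excluded_middle_informative => Hr; last by rewrite addn0.
      by exfalso; apply: Hno; exists n.
    pose t' := st (I N.+1).
    have Ag : forall y, nrp T0 y < N.+1 -> t' y = T0 y /\ nrp t' y = nrp T0 y.
      by move=> y Hy; apply: simn_agree Hy; apply: FT.
    have Hb' : forall n, t' (branch b n) <> None.
      by move=> n; rewrite (Ag _ (Hle n)).1.
    case: (proj2_sig (s (I N.+1))) => _ _ _ Hbr.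
    have [n [Hn Hrp]] := Hbr b Hb' N.
    apply: Hno; exists n; split => //.
    apply: (is_rp_ext (t := t')) Hrp.
      move=> p E.
      have H1 : nrp T0 (rcons p 1) < N.+1 by rewrite -E; apply: Hle.
      have H2 : nrp T0 (rcons p 0) < N.+1 by rewrite nrp_rcons -(nrp_rcons _ _ 1).
      have H3 : nrp T0 p < N.+1.
        by apply: leq_ltn_trans H1; rewrite nrp_rcons leq_addr.
      by rewrite (Ag _ H3).1 (Ag _ H2).1.
    exact: (Ag _ (Hle n)).1.
exists (exist _ T0 HT) => M.
exact: FT.
Qed.
Section FmLemmas.
Variable m : nat.
Implicit Types a b c : Fm m.

Definition Lv (v : 'I_m -> infproof) : nat := \sum_(i < m) lheight (v i).
Definition lev n k (v : 'I_m -> infproof) : nat := if Lv v < k then n.+1 else n.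

Lemma simnk_at n k a b : simnk n k a b -> forall v, simn (lev n k v) (proj1_sig a v) (proj1_sig b v).
Proof. by move=> [H1 H2] v; rewrite /lev; case: ifP => h; [apply: H2|apply: H1]. Qed.

Lemma simnk_of_at n k a b :
  (forall v, simn (lev n k v) (proj1_sig a v) (proj1_sig b v)) -> simnk n k a b.
Proof.
move=> H; split => v.
  by apply: simn_mono (H v); rewrite /lev; case: ifP.
by move=> Hv; have := H v; rewrite /lev /Lv Hv.
Qed.

Lemma simnk_weaken n k n' k' a b : simnk n k a b ->
  ((n' < n)%N \/ (n' = n /\ (k' <= k)%N)) -> simnk n' k' a b.
Proof.
move=> H Hc; apply: simnk_of_at => v; apply: simn_mono (simnk_at H v).
rewrite /lev; case: Hc => [Hn|[-> Hk]].
  by case: ifP; case: ifP => _ _ //; lia.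
case: ifP => h1; case: ifP => h2 //; lia.
Qed.

Lemma simnk_sym n k a b : simnk n k a b -> simnk n k b a.
Proof. by move=> H; apply: simnk_of_at => v; apply: simn_sym; apply: simnk_at. Qed.

Lemma simnk_trans n k a b c : simnk n k a b -> simnk n k b c -> simnk n k a c.
Proof.
move=> H1 H2; apply: simnk_of_at => v.
by apply: simn_trans (simnk_at H1 v) (simnk_at H2 v).
Qed.

Lemma simnk_refl n k a : simnk n k a a.
Proof. by split. Qed.

Lemma simnk00 a b : simnk 0 0 a b.
Proof. by split => v; [apply: simn0|]. Qed.

Lemma simnk_all n a b : (forall k, simnk n k a b) -> simnk n.+1 0 a b.
Proof.
move=> H; split => // v.
by have := simnk_at (H (Lv v).+1) v; rewrite /lev ltnSn.
Qed.

Lemma Fm_eq a b : (forall n, simnk n 0 a b) -> a = b.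
Proof.
move=> H.
have E : proj1_sig a = proj1_sig b.
  apply: functional_extensionality => v; apply: simn_all_eq => n.
  by case: (H n) => H1 _; apply: H1.
case: a b E {H} => fa Ha [fb Hb] /= E; subst.
by rewrite (proof_irrelevance _ Ha Hb).
Qed.

Lemma Lv_simn n (v v' : 'I_m -> infproof) : (0 < n)%N ->
  (forall i, simn n (v i) (v' i)) -> Lv v = Lv v'.
Proof.
move=> Hn H; rewrite /Lv; apply: eq_bigr => i _; apply: lheight_simn.
exact: simn_mono (H i).
Qed.

Lemma find_max (P : nat -> Prop) N : P 0%N -> ~ P N -> exists n, P n /\ ~ P n.+1.
Proof.
elim: N => [|N IH] H0 HN; first by [].
case: (classic (P N)) => HP; first by exists N.
exact: IH.
Qed.

Local Open Scope R_scope.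

Definition f2 (n k : nat) : R := (/2) ^ n + (/2) ^ (n + k).

Lemma hpos n : 0 < (/2) ^ n.
Proof. apply: pow_lt; lra. Qed.

Lemma hanti n n' : (n <= n')%N -> (/2) ^ n' <= (/2) ^ n.
Proof.
move=> /subnK <-; elim: (n' - n)%N => [|d IH]; first by rewrite add0n; lra.
rewrite addSn; change ((/2) ^ (d + n).+1) with (/2 * (/2) ^ (d + n)).
have := hpos (d + n); lra.
Qed.

Lemma f2pos n k : 0 < f2 n k.
Proof. rewrite /f2; have := hpos n; have := hpos (n + k); lra. Qed.

Lemma lm_spec a b : exists g, lm a b = / 2 * g /\ 0 <= g /\
  (forall n k, simnk n k a b -> g <= f2 n k) /\
  (forall z, (forall n k, simnk n k a b -> z <= f2 n k) -> z <= g).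
Proof.
rewrite /lm.
set E := (fun x => exists n k : nat, simnk n k a b /\ x = (/2) ^ n + (/2) ^ (n + k)).
have [Hlb Hglb] := Glb_Rbar_correct E.
have Hlb0 : is_lb_Rbar E 0.
  by move=> x [n [k [_ ->]]] /=; apply: Rlt_le; apply: f2pos.
have HE2 : E 2.
  exists 0%N, 0%N; split; first exact: simnk00. by rewrite /= ; lra.
move: Hlb Hglb Hlb0; case: (Glb_Rbar E) => [g| |] /= Hlb Hglb Hlb0.
- exists g; split => //; split; first exact: (Hglb 0 Hlb0).
  split; first by move=> n k H; apply: (Hlb (f2 n k)); exists n, k.
  by move=> z Hz; apply: (Hglb z) => x [n [k [Hs ->]]]; apply: Hz.
- by have := Hlb 2 HE2.
- by have := Hglb 0 Hlb0.
Qed.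

Lemma lm_le n k a b : simnk n k a b -> lm a b <= / 2 * f2 n k.
Proof. move=> H; have [g [-> [_ [Hg _]]]] := lm_spec a b; have := Hg n k H; lra. Qed.

Lemma lm_ge0 a b : 0 <= lm a b.
Proof. have [g [-> [Hg _]]] := lm_spec a b; lra. Qed.

Lemma lm_refl a : lm a a = 0.
Proof.
have [g [-> [Hg0 [Hg _]]]] := lm_spec a a.
suff : g = 0 by move=> ->; lra.
apply: NNPP => Hne.
have Hgp : 0 < g / 2 by lra.
have [N HN] := pow_lt_1_zero (/2) ltac:(rewrite Rabs_pos_eq; lra) _ Hgp.
have := HN N (le_n N); rewrite Rabs_pos_eq; last exact: Rlt_le (hpos N).
have := Hg N N (simnk_refl _ _ _); rewrite /f2.
have := hanti (leq_addr N N); lra.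
Qed.

Lemma lm_attained a b : a <> b -> exists n k, simnk n k a b /\ lm a b = / 2 * f2 n k.
Proof.
move=> Hab.
have [N1 HN1] : exists N, ~ simnk N 0 a b.
  apply: NNPP => Hc; apply: Hab; apply: Fm_eq => n.
  by apply: NNPP => Hn; apply: Hc; exists n.
have [n0 [H0 H0']] := find_max (P := fun n => simnk n 0 a b) (simnk00 a b) HN1.
have [K HK] : exists K, ~ simnk n0 K a b.
  apply: NNPP => Hc; apply: H0'; apply: simnk_all => k.
  by apply: NNPP => Hn; apply: Hc; exists k.
have [k0 [Hk0 Hk0']] := find_max (P := fun k => simnk n0 k a b) H0 HK.
exists n0, k0; split => //.
have [g [-> [_ [Hg Hg']]]] := lm_spec a b.
suff : g = f2 n0 k0 by move=> ->.
apply: Rle_antisym; first exact: Hg.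
apply: Hg' => n k Hnk.
case: (ltngtP n n0) => Hn.
- rewrite /f2.
  have h1 := hanti (leq_addr k0 n0).
  have h2 : (/2) ^ n0 <= (/2) ^ n.+1 := hanti Hn.
  have h3 := hpos (n + k).
  rewrite /= in h2; lra.
- by exfalso; apply: H0'; apply: simnk_weaken Hnk _; lia.
- subst n.
  case: (leqP k k0) => Hk; last first.
    by exfalso; apply: Hk0'; apply: simnk_weaken Hnk _; right.
  rewrite /f2; have := hanti (n := (n0 + k)%N) (n' := (n0 + k0)%N); rewrite leq_add2l.
  move=> h; have := h Hk; lra.
Qed.

Lemma lm_eq0 a b : lm a b = 0 -> a = b.
Proof.
move=> H; apply: NNPP => Hab.
have [n [k [_ E]]] := lm_attained Hab.
have := f2pos n k; lra.
Qed.

Lemma lm_sym_le a b : lm a b <= lm b a.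
Proof.
have [g [-> [_ [Hg _]]]] := lm_spec a b.
have [g' [-> [_ [_ Hg']]]] := lm_spec b a.
suff : g <= g' by lra.
apply: Hg' => n k H; apply: Hg; exact: simnk_sym.
Qed.

Lemma lm_ultra a b c : lm a c <= Rmax (lm a b) (lm b c).
Proof.
case: (classic (a = b)) => [<-|Hab]; first by rewrite lm_refl; apply: Rmax_r.
case: (classic (b = c)) => [<-|Hbc]; first by rewrite lm_refl; apply: Rmax_l.
have [n1 [k1 [H1 E1]]] := lm_attained Hab.
have [n2 [k2 [H2 E2]]] := lm_attained Hbc.
rewrite E1 E2.
case: (ltngtP n1 n2) => Hn.
- apply: Rle_trans (Rmax_l _ _).
  apply: lm_le; apply: simnk_trans H1 _; apply: simnk_weaken H2 _; by left.
- apply: Rle_trans (Rmax_r _ _).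
  apply: lm_le; apply: simnk_trans _ H2; apply: simnk_weaken H1 _; by left.
- subst n2. case: (leqP k1 k2) => Hk.
  + apply: Rle_trans (Rmax_l _ _).
    apply: lm_le; apply: simnk_trans H1 _; apply: simnk_weaken H2 _; by right.
  + apply: Rle_trans (Rmax_r _ _).
    apply: lm_le; apply: simnk_trans _ H2; apply: simnk_weaken H1 _; right; split => //.
    exact: ltnW.
Qed.

End FmLemmas.
Local Open Scope R_scope.

Lemma ex_least (P : nat -> Prop) : (exists n, P n) -> exists n, P n /\ forall k, P k -> (n <= k)%N.
Proof.
move=> [n Hn]; apply: NNPP => Hno.
have H : forall n k, (k <= n)%N -> ~ P k.
  elim=> [|n' IH] k Hk HPk.
    apply: Hno; exists k; split => // k' _; move: Hk; rewrite leqn0 => /eqP ->; done.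
  case: (leqP k n') => Hk'; first exact: IH Hk' HPk.
  apply: Hno; exists k; split => // k' Hk2.
  case: (leqP k k') => // Hlt; exfalso; apply: (IH k') => //; lia.
exact: (H n n (leqnn n) Hn).
Qed.

Lemma weakest m r : 0 < r -> exists NK : nat * nat,
  (forall a b : Fm m, lm a b <= r -> simnk NK.1 NK.2 a b) /\
  (forall a b : Fm m, simnk NK.1 NK.2 a b -> lm a b <= r).
Proof.
move=> Hr.
have [n0 Hn0] : exists n, exists k, / 2 * f2 n k <= r.
  have [N HN] := pow_lt_1_zero (/2) ltac:(rewrite Rabs_pos_eq; lra) _ Hr.
  exists N, 0%N; have := HN N (le_n N); rewrite Rabs_pos_eq; last exact: Rlt_le (hpos N).
  rewrite /f2 addn0; lra.
have [N [[k1 Hk1] HNl]] := ex_least (P := fun n => exists k, / 2 * f2 n k <= r) (ex_intro _ n0 Hn0).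
have [K [HK HKl]] := ex_least (P := fun k => / 2 * f2 N k <= r) (ex_intro _ k1 Hk1).
exists (N, K); split => a b /=.
  move=> Hab; case: (classic (a = b)) => [<-|Hne]; first exact: simnk_refl.
  have [n [k [Hs E]]] := lm_attained Hne.
  have Hn : (N <= n)%N by apply: HNl; exists k; rewrite -E.
  rewrite leq_eqVlt in Hn; case/orP: Hn => [/eqP En|Hn].
    subst n; apply: simnk_weaken Hs _; right; split => //; apply: HKl; rewrite -E; done.
  by apply: simnk_weaken Hs _; left.
by move=> H; apply: Rle_trans (lm_le H) HK.
Qed.
Lemma bounded_max (f : nat -> nat) B : (forall i, (f i <= B)%N) -> exists j, forall i, (f i <= f j)%N.
Proof.
elim: B => [|B IH] H.
  by exists 0%N => i; have := H i; rewrite leqn0 => /eqP ->.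
case: (classic (exists j, f j = B.+1)) => [[j Hj]|Hno].
  by exists j => i; rewrite Hj.
apply: IH => i; have := H i; rewrite leq_eqVlt => /orP [/eqP E|//].
by exfalso; apply: Hno; exists i.
Qed.

Theorem proposition4p3 (m : nat) :
  is_ultrametric (@lm m) /\ spherically_complete (@lm m).
Proof.
split.
  split; first exact: lm_ge0.
  split; first by move=> a b; split; [exact: lm_eq0|move=> ->; exact: lm_refl].
  split; first by move=> a b; apply: Rle_antisym; apply: lm_sym_le.
  split; last exact: lm_ultra.
  move=> a b c; apply: Rle_trans (lm_ultra a b c) _; apply: Rmax_lub;
    have := lm_ge0 a b; have := lm_ge0 b c; lra.
move=> c r Hr Hnest; rewrite /cball in Hnest *.
have chain : forall i j, (i <= j)%N -> forall y, lm (c j) y <= r j -> lm (c i) y <= r i.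
  move=> i j /subnK <-; elim: (j - i)%N => [|d IH] y H; first by rewrite add0n in H.
  rewrite addSn in H; apply: IH; exact: Hnest.
have cin' : forall i j, (i <= j)%N -> lm (c i) (c j) <= r i.
  by move=> i j Hij; apply: (chain i j Hij); rewrite lm_refl; apply: Hr.
case: (classic (exists i, r i = 0)) => [[i Hi]|Hno].
  exists (c i) => j; case: (leqP j i) => Hji; first exact: cin'.
  have E : c i = c j.
    apply: lm_eq0; apply: Rle_antisym; last exact: lm_ge0.
    by rewrite -Hi; apply: cin'; apply: ltnW.
  by rewrite E lm_refl.
have Hrp : forall i, 0 < r i.
  move=> i; case: (Hr i) => // E; exfalso; apply: Hno; by exists i.
pose W i := proj1_sig (constructive_indefinite_description _ (weakest m (Hrp i))).
have HW : forall i, (forall a b : Fm m, lm a b <= r i -> simnk (W i).1 (W i).2 a b) /\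
  (forall a b : Fm m, simnk (W i).1 (W i).2 a b -> lm a b <= r i).
  move=> i; exact: (proj2_sig (constructive_indefinite_description _ (weakest m (Hrp i)))).
pose N i := (W i).1. pose K i := (W i).2.
have Hij : forall i j, (i <= j)%N -> simnk (N i) (K i) (c i) (c j).
  by move=> i j H; apply: (HW i).1; apply: cin'.
case: (classic (exists B, forall i, (N i <= B)%N)) => [[B HB]|Hunb].
- pose h i l := if (l < K i)%N then (N i).+1 else N i.
  have Hh : forall l, exists j, forall i, (h i l <= h j l)%N.
    move=> l; apply: (bounded_max (B := B.+1)) => i; rewrite /h.
    by case: ifP => _; [rewrite ltnS|apply: leqW]; apply: HB.
  pose g l := proj1_sig (constructive_indefinite_description _ (Hh l)).
  have Hg : forall l i, (h i l <= h (g l) l)%N.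
    move=> l; exact: (proj2_sig (constructive_indefinite_description _ (Hh l))).
  pose y0 := fun v => proj1_sig (c (g (Lv v))) v.
  have ney : nonexpansive y0.
    move=> v v' n H; case: n H => [|n] H; first exact: simn0.
    rewrite /y0 (Lv_simn (n := n.+1) _ H) //.
    by apply: (proj2_sig (c (g (Lv v')))).
  exists (exist _ y0 ney) => i.
  apply: (HW i).2; apply: simnk_of_at => v /=.
  rewrite /y0.
  have El : lev (N i) (K i) v = h i (Lv v) by [].
  case: (leqP i (g (Lv v))) => Hj.
    exact: simnk_at (Hij _ _ Hj) v.
  have := simnk_at (Hij _ _ (ltnW Hj)) v.
  move=> H; apply: simn_sym; apply: simn_mono H.
  by rewrite El; apply: Hg.
- have Hex : forall M, exists i, (M <= N i)%N.
    move=> M; apply: NNPP => Hc; apply: Hunb; exists M => i.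
    case: (leqP (N i) M) => // Hlt; exfalso; apply: Hc; exists i; exact: ltnW.
  pose I M := proj1_sig (constructive_indefinite_description _ (Hex M)).
  have HIM : forall M, (M <= N (I M))%N.
    move=> M; exact: (proj2_sig (constructive_indefinite_description _ (Hex M))).
  have HI : forall v M j, (I M <= j)%N -> simn M (proj1_sig (c (I M)) v) (proj1_sig (c j) v).
    move=> v M j Hj; apply: simn_mono (HIM M) _.
    by case: (Hij _ _ Hj) => H1 _; apply: H1.
  pose Y v := proj1_sig (constructive_indefinite_description _
                (limit_infproof (s := fun j => proj1_sig (c j) v) (HI v))).
  have HY : forall v M, simn M (Y v) (proj1_sig (c (I M)) v).
    move=> v; exact: (proj2_sig (constructive_indefinite_description _
                (limit_infproof (s := fun j => proj1_sig (c j) v) (HI v)))).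
  have ney : nonexpansive Y.
    move=> v v' n H.
    apply: simn_trans (HY v n) _.
    apply: simn_trans _ (simn_sym (HY v' n)).
    exact: (proj2_sig (c (I n))).
  exists (exist _ Y ney) => i.
  apply: (HW i).2; apply: simnk_of_at => v /=.
  set p := lev (N i) (K i) v.
  pose j := maxn i (I p).
  have H1 : simn p (proj1_sig (c i) v) (proj1_sig (c j) v).
    exact: simnk_at (Hij _ _ (leq_maxl _ _)) v.
  have H2 := HI v p j (leq_maxr _ _).
  apply: simn_trans H1 _; apply: simn_sym.
  exact: simn_trans (HY v p) H2.
Qed.
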